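(* The Steiner circumellipse $\mathcal{E}'$ of $T'=P_1'P_2'P_3'$ is centered at $C_2=\left(-\frac{a^2+b^2}{2a}\cos u,-\frac{a^2+b^2}{2b}\sin u\right)$, has axes parallel to the coordinate axes, with semi-axis $\frac{3c^2}{2a}$ in the $x$-direction and $\frac{3c^2}{2b}$ in the $y$-direction. Hence $\mathcal{E}'$ is similar to the copy of $\mathcal{E}$ rotated by $90^\circ$ about $O$, its area $\frac{9\pi c^4}{4ab}$ is independent of $u$, the ratio of the areas of $\mathcal{E}'$ and $\mathcal{E}$ is $\frac{9c^4}{4a^2b^2}$, and $\mathcal{E}'$ is congruent to $\mathcal{E}$ exactly when $a/b=(1+\sqrt{10})/3$.
   Context: Let $a>b>0$ and $c>0$ with $c^2=a^2-b^2$. Let $\mathcal{E}$ be the ellipse $x^2/a^2+y^2/b^2=1$ with center $O=(0,0)$. Fix $u\in\mathbb{R}$. Let $\Delta_u(t)=(x_u(t),y_u(t))$, where $x_u(t)=\frac1a\big(c^2(1+\cos(t+u))\cos t-a^2\cos u\big)$ and $y_u(t)=\frac1b\big(c^2\cos t\sin(t+u)-c^2\sin t-a^2\sin u\big)$ (the negative pedal curve of $\mathcal{E}$ with respect to $M=(a\cos u,b\sin u)$). For $i=1,2,3$ let $t_i=-u/3-2\pi(i-1)/3$ and $P_i'=\Delta_u(t_i)$ (the cusps). The Steiner circumellipse of a triangle is the unique ellipse through its three vertices centered at its centroid. *)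

(* Defs.v *)
From HB Require Import structures.
From mathcomp Require Import all_boot all_order all_algebra.
From mathcomp Require Import all_classical all_reals all_analysis.
Set Implicit Arguments. Unset Strict Implicit. Unset Printing Implicit Defensive.
Import Order.TTheory GRing.Theory Num.Theory.
Local Open Scope classical_set_scope.
Local Open Scope ring_scope.

Section Defs.
Variable R : realType.
Notation pt := (R * R)%type.

(* the negative pedal curve Delta_u(t) of the ellipse x^2/a^2+y^2/b^2=1 *)
Definition Delta (a b c u t : R) : pt :=
  ( (c ^+ 2 * (1 + cos (t + u)) * cos t - a ^+ 2 * cos u) / a,
    (c ^+ 2 * cos t * sin (t + u) - c ^+ 2 * sin t - a ^+ 2 * sin u) / b ).

Definition cusp_t (u : R) (i : nat) : R := - (u / 3) - 2 * pi * (i.-1)%:R / 3.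
Definition cusp (a b c u : R) (i : nat) : pt := Delta a b c u (cusp_t u i).

Definition centroid (P1 P2 P3 : pt) : pt :=
  ((P1.1 + P2.1 + P3.1) / 3, (P1.2 + P2.2 + P3.2) / 3).

(* an ellipse with center C: {p | al dx^2 + 2 be dx dy + ga dy^2 = 1},
   with a positive definite quadratic form *)
Definition ellipse_with_center (E : set pt) (C : pt) : Prop :=
  exists al be ga : R, 0 < al /\ 0 < al * ga - be ^+ 2 /\
    E = [set p | al * (p.1 - C.1) ^+ 2 + 2 * be * (p.1 - C.1) * (p.2 - C.2)
                 + ga * (p.2 - C.2) ^+ 2 = 1].

Definition steiner_circumellipse (P1 P2 P3 : pt) (E : set pt) : Prop :=
  ellipse_with_center E (centroid P1 P2 P3) /\ E P1 /\ E P2 /\ E P3.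

Definition axis_ellipse (h k A B : R) : set pt :=
  [set p | ((p.1 - h) / A) ^+ 2 + ((p.2 - k) / B) ^+ 2 = 1].
Definition axis_ellipse_region (h k A B : R) : set pt :=
  [set p | ((p.1 - h) / A) ^+ 2 + ((p.2 - k) / B) ^+ 2 <= 1].

Definition rot90 (p : pt) : pt := (- p.2, p.1).

Definition dist2 (p q : pt) : R := (p.1 - q.1) ^+ 2 + (p.2 - q.2) ^+ 2.

Definition maps_onto (f : pt -> pt) (S T : set pt) : Prop := f @` S = T.

Definition are_similar (S T : set pt) : Prop :=
  exists (f : pt -> pt) (k : R), 0 < k /\
    (forall p q, dist2 (f p) (f q) = k ^+ 2 * dist2 p q) /\ maps_onto f S T.

Definition are_congruent (S T : set pt) : Prop :=
  exists f : pt -> pt,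
    (forall p q, dist2 (f p) (f q) = dist2 p q) /\ maps_onto f S T.

Definition area (A : set pt) : \bar R :=
  ((@lebesgue_measure R) \x (@lebesgue_measure R))%E A.

End Defs.

(* Main.v *)
Require Import Defs.
From HB Require Import structures.
From mathcomp Require Import all_boot all_order all_algebra.
From mathcomp Require Import all_classical all_reals all_analysis.
From mathcomp Require Import ring lra.
Import Order.TTheory GRing.Theory Num.Theory numFieldNormedType.Exports.
Local Open Scope classical_set_scope.
Local Open Scope ring_scope.

Section Helpers.
Variable R : realType.
Notation mu := (@lebesgue_measure R).
Lemma scR (a b : R) : a *: b = a * b. Proof. by []. Qed.
Lemma cont_of_der {f : R -> R} : (forall x, derivable f x 1) -> continuous f.
Proof. by move=> H x; apply/differentiable_continuous/derivable1_diffP/H. Qed.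
Lemma q_der (h A x : R) : derivable (fun t : R => 1 - ((t - h) / A) ^+ 2) x 1.
Proof. apply: ex_derive. Qed.
Lemma G_cont (h A B : R) : continuous (fun t : R => 2 * B * Num.sqrt (1 - ((t - h) / A) ^+ 2)).
Proof.
move=> x.
have -> : (fun t : R => 2 * B * Num.sqrt (1 - ((t - h) / A) ^+ 2)) =
  (cst (2 * B)) \* (Num.sqrt \o (fun t : R => 1 - ((t - h) / A) ^+ 2)) by [].
apply: continuousM; first exact: cst_continuous.
apply: continuous_comp; first exact: (cont_of_der (q_der h A) x).
exact: sqrt_continuous.
Qed.
Lemma dF (h A x : R) : is_derive x 1 (fun t => h - A * cos t) (A * sin x).
Proof. apply: is_derive_eq; rewrite !scR; ring. Qed.
Lemma dF1 (h A : R) : derive1 (fun t => h - A * cos t) = (fun x => A * sin x).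
Proof. by apply/funext => x; rewrite derive1E; case: (dF h A x). Qed.
Lemma dH (A B x : R) : is_derive x 1 (fun t => A * B * (t - sin t * cos t)) (2 * A * B * sin x ^+ 2).
Proof.
apply: is_derive_eq; rewrite !scR.
have -> : cos x * cos x = 1 - sin x ^+ 2 by rewrite -expr2 cos2sin2.
ring.
Qed.
Lemma dH1 (A B : R) : derive1 (fun t => A * B * (t - sin t * cos t)) = (fun x => 2 * A * B * sin x ^+ 2).
Proof. by apply/funext => x; rewrite derive1E; case: (dH A B x). Qed.

Lemma LRcont (f : R -> R) a b : (forall x, derivable f x 1) -> derivable_oo_LRcontinuous f a b.
Proof.
move=> H; have cf := cont_of_der H; split.
- by move=> x _; apply: H.
- by apply: cvg_at_right_filter; apply: cf.
- by apply: cvg_at_left_filter; apply: cf.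
Qed.

Lemma section_meas (h k A B x : R) : 0 < A -> 0 < B ->
  mu (xsection (axis_ellipse_region h k A B) x) =
  ((2 * B * Num.sqrt (1 - ((x - h) / A) ^+ 2))%R)%:E.
Proof.
move=> A0 B0.
set r := 1 - ((x - h) / A) ^+ 2.
have [r0|r0] := ltP r 0.
  rewrite ltr0_sqrtr // mulr0.
  rewrite (_ : xsection _ _ = set0) ?measure0 //.
  apply/seteqP; split => y //=; rewrite /xsection /= inE /axis_ellipse_region /=.
  move=> H; have : 0 <= ((y - k) / B) ^+ 2 by apply: sqr_ge0.
  rewrite /r in r0; lra.
set s := Num.sqrt r.
have s0 : 0 <= s by apply: sqrtr_ge0.
have ss : s ^+ 2 = r by rewrite sqr_sqrtr.
rewrite (_ : xsection _ _ = `[k - B * s, k + B * s]%classic).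
  rewrite lebesgue_measure_itv /= lte_fin.
  have [_|H] := ltP (k - B * s) (k + B * s).
    rewrite -EFinD; congr (EFin _); ring.
  have -> : s = 0 by nra.
  by rewrite mulr0.
apply/seteqP; split => y /=; rewrite /xsection /= inE /axis_ellipse_region /= in_itv /=.
  move=> H.
  have H1 : ((y - k) / B) ^+ 2 <= s ^+ 2 by rewrite ss /r; lra.
  have H2 : (y - k) ^+ 2 <= (B * s) ^+ 2.
    move: H1; rewrite expr_div_n ler_pdivrMr ?exprn_gt0 //; nra.
  have Bs0 : 0 <= B * s by apply: mulr_ge0 => //; apply: ltW.
  apply/andP; split; nra.
move=> /andP [H1 H2].
have Bs0 : 0 <= B * s by apply: mulr_ge0 => //; apply: ltW.
have H3 : (y - k) ^+ 2 <= (B * s) ^+ 2 by nra.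
have H4 : ((y - k) / B) ^+ 2 <= s ^+ 2.
  rewrite expr_div_n ler_pdivrMr ?exprn_gt0 //; nra.
rewrite ss /r in H4; lra.
Qed.

Lemma pcos (j : nat) (x : R) : cos (x - (pi *+ 2) *+ j) = cos x.
Proof. by have := periodicn (@cosD2pi R) j (x - (pi *+ 2) *+ j); rewrite subrK. Qed.
Lemma psin (j : nat) (x : R) : sin (x - (pi *+ 2) *+ j) = sin x.
Proof. by have := periodicn (@sinD2pi R) j (x - (pi *+ 2) *+ j); rewrite subrK. Qed.

Lemma Delta_at (a b c u t : R) (j : nat) : a != 0 -> b != 0 -> c ^+ 2 = a ^+ 2 - b ^+ 2 ->
  u = - (t + t + t) - (pi *+ 2) *+ j ->
  Delta a b c u t = (3 * c ^+ 2 / (2 * a) * cos t - (a ^+ 2 + b ^+ 2) / (2 * a) * cos u,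
                     - (3 * c ^+ 2 / (2 * b)) * sin t - (a ^+ 2 + b ^+ 2) / (2 * b) * sin u).
Proof.
move=> a0 b0 hc hu.
have cu : cos u = cos (t + t + t) by rewrite hu pcos cosN.
have su : sin u = - sin (t + t + t) by rewrite hu psin sinN.
have ctu : cos (t + u) = cos (t + t).
  by rewrite hu (_ : t + _ = - (t + t) - (pi *+ 2) *+ j); [rewrite pcos cosN | ring].
have stu : sin (t + u) = - sin (t + t).
  by rewrite hu (_ : t + _ = - (t + t) - (pi *+ 2) *+ j); [rewrite psin sinN | ring].
have P : sin t ^+ 2 = 1 - cos t ^+ 2 by rewrite sin2cos2.
have L1 : cos (t + t + t) = 4 * cos t ^+ 3 - 3 * cos t by rewrite !(cosD, sinD); ring: P.
have L2 : sin (t + t + t) = 3 * sin t - 4 * sin t ^+ 3.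
  rewrite !(cosD, sinD); have Q : cos t ^+ 2 = 1 - sin t ^+ 2 by rewrite cos2sin2.
  ring: Q.
have L3 : cos (t + t) = 2 * cos t ^+ 2 - 1 by rewrite !cosD; ring: P.
have L4 : cos t * sin (t + t) = 2 * sin t - 2 * sin t ^+ 3.
  rewrite !(cosD, sinD); have Q : cos t ^+ 2 = 1 - sin t ^+ 2 by rewrite cos2sin2.
  ring: Q.
rewrite /Delta ctu stu cu su mulrN -[c ^+ 2 * cos t * _]mulrA L1 L2 L3 L4 hc.
by congr pair; field.
Qed.
Lemma alg3 (X Y Z x y r : R) : y ^+ 2 = 1 - x ^+ 2 -> r ^+ 2 = 3 -> r != 0 ->
  X * (2 * x) ^+ 2 - 2 * Y * (2 * x) * (2 * y) + Z * (2 * y) ^+ 2 = 4 ->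
  X * (- x + r * y) ^+ 2 - 2 * Y * (- x + r * y) * (- y - r * x) + Z * (- y - r * x) ^+ 2 = 4 ->
  X * (- x - r * y) ^+ 2 - 2 * Y * (- x - r * y) * (- y + r * x) + Z * (- y + r * x) ^+ 2 = 4 ->
  X = 1 /\ Y = 0 /\ Z = 1.
Proof.
move=> Py Hr r0 e1 e2 e3.
have S : 6 * (X + Z) = 12.
  have -> : 6 * (X + Z) =
    (X * (2 * x) ^+ 2 - 2 * Y * (2 * x) * (2 * y) + Z * (2 * y) ^+ 2) +
    (X * (- x + r * y) ^+ 2 - 2 * Y * (- x + r * y) * (- y - r * x) + Z * (- y - r * x) ^+ 2) +
    (X * (- x - r * y) ^+ 2 - 2 * Y * (- x - r * y) * (- y + r * x) + Z * (- y + r * x) ^+ 2)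
    by ring: Py Hr.
  by rewrite e1 e2 e3; ring.
have XZ : X + Z - 2 = 0 by lra.
have F1 : (X - 1) * ((2 * x) ^+ 2 - (2 * y) ^+ 2) - Y * (2 * (2 * x) * (2 * y)) = 0.
  have -> : (X - 1) * ((2 * x) ^+ 2 - (2 * y) ^+ 2) - Y * (2 * (2 * x) * (2 * y)) =
    (X * (2 * x) ^+ 2 - 2 * Y * (2 * x) * (2 * y) + Z * (2 * y) ^+ 2) - 4
    - (X + Z - 2) * (2 * y) ^+ 2 by ring: Py.
  by rewrite e1 XZ; ring.
have F2 : (X - 1) * ((- x + r * y) ^+ 2 - (- y - r * x) ^+ 2)
          - Y * (2 * (- x + r * y) * (- y - r * x)) = 0.
  have -> : (X - 1) * ((- x + r * y) ^+ 2 - (- y - r * x) ^+ 2)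
          - Y * (2 * (- x + r * y) * (- y - r * x)) =
    (X * (- x + r * y) ^+ 2 - 2 * Y * (- x + r * y) * (- y - r * x) + Z * (- y - r * x) ^+ 2) - 4
    - (X + Z - 2) * (- y - r * x) ^+ 2 by ring: Py Hr.
  by rewrite e2 XZ; ring.
have D0 : (X - 1) * (8 * r) = 0.
  have -> : (X - 1) * (8 * r) =
    (2 * (- x + r * y) * (- y - r * x)) *
      ((X - 1) * ((2 * x) ^+ 2 - (2 * y) ^+ 2) - Y * (2 * (2 * x) * (2 * y))) -
    (2 * (2 * x) * (2 * y)) *
      ((X - 1) * ((- x + r * y) ^+ 2 - (- y - r * x) ^+ 2)
          - Y * (2 * (- x + r * y) * (- y - r * x))) by ring: Py Hr.
  by rewrite F1 F2; ring.
have Y0 : Y * (8 * r) = 0.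
  have -> : Y * (8 * r) =
    ((- x + r * y) ^+ 2 - (- y - r * x) ^+ 2) *
      ((X - 1) * ((2 * x) ^+ 2 - (2 * y) ^+ 2) - Y * (2 * (2 * x) * (2 * y))) -
    ((2 * x) ^+ 2 - (2 * y) ^+ 2) *
      ((X - 1) * ((- x + r * y) ^+ 2 - (- y - r * x) ^+ 2)
          - Y * (2 * (- x + r * y) * (- y - r * x))) by ring: Py Hr.
  by rewrite F1 F2; ring.
have r8 : 8 * r != 0 by rewrite mulf_neq0.
have X1 : X - 1 = 0 by apply: (mulIf r8); rewrite D0 mul0r.
have -> : Y = 0 by apply: (mulIf r8); rewrite Y0 mul0r.
split => //; lra.
Qed.

Lemma cos3 (t : R) : cos (t + t + t) = 4 * cos t ^+ 3 - 3 * cos t.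
Proof.
have P : sin t ^+ 2 = 1 - cos t ^+ 2 by rewrite sin2cos2.
by rewrite !(cosD, sinD); ring: P.
Qed.

Lemma w_facts : cos (2 * pi / 3) = - 1 / 2 :> R /\ (2 * sin (2 * pi / 3)) ^+ 2 = 3 :> R
  /\ 0 < sin (2 * pi / 3) :> R.
Proof.
set w : R := 2 * pi / 3.
have pi0 := @pi_gt0 R.
have w0 : 0 < w by rewrite /w; apply: divr_gt0 => //; apply: mulr_gt0.
have wpi : w < pi by rewrite /w; lra.
have c3 : 4 * cos w ^+ 3 - 3 * cos w = 1.
  by rewrite -cos3 (_ : w + w + w = pi *+ 2) ?cos2pi // /w; rewrite mulr2n; field.
have cl : cos w < 1.
  rewrite -cos0 ltr_cos //; rewrite in_itv /=; apply/andP; split; lra.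
have cw : cos w = - 1 / 2.
  have : (cos w - 1) * (2 * cos w + 1) ^+ 2 = 0.
    have -> : (cos w - 1) * (2 * cos w + 1) ^+ 2 = 4 * cos w ^+ 3 - 3 * cos w - 1 by ring.
    by rewrite c3 subrr.
  move/eqP; rewrite mulf_eq0 => /orP [| ]; first by rewrite subr_eq0 => /eqP; lra.
  by rewrite sqrf_eq0 => /eqP; lra.
have sp : 0 < sin w by apply: sin_gt0_pi; rewrite w0 wpi.
split => //; split => //.
have := cos2Dsin2 w; rewrite cw => H.
have -> : (2 * sin w) ^+ 2 = 4 * sin w ^+ 2 by ring.
lra.
Qed.

Section ER.
Local Open Scope ereal_scope.
Lemma area_step1 (h k A B : R) : (0 < A)%R -> (0 < B)%R ->
  area (axis_ellipse_region h k A B) =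
  \int[mu]_(x in `[(h - A)%R, (h + A)%R]) ((2 * B * Num.sqrt (1 - ((x - h) / A) ^+ 2))%R)%:E.
Proof.
move=> A0 B0.
rewrite /area.
transitivity (\int[mu]_x ((2 * B * Num.sqrt (1 - ((x - h) / A) ^+ 2))%R)%:E).
  rewrite /product_measure1; apply: eq_integral => x _ /=; by rewrite section_meas.
rewrite [RHS]integral_mkcond; apply: eq_integral => x _; rewrite patchE.
case: ifPn => // /negP; rewrite inE /= in_itv /= => H.
rewrite ltr0_sqrtr ?mulr0 //.
have : (1 < ((x - h) / A) ^+ 2)%R.
  rewrite expr_div_n ltr_pdivlMr ?exprn_gt0 // mul1r.
  have [H1|H1] := leP (h - A)%R x.
    have H2 : (h + A < x)%R by rewrite ltNge; apply/negP => H3; apply: H; rewrite H1 H3.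
    nra.
  nra.
lra.
Qed.
Lemma half_disk (h A B : R) : (0 < A)%R -> (0 < B)%R ->
  \int[mu]_(x in `[(h - A)%R, (h + A)%R]) ((2 * B * Num.sqrt (1 - ((x - h) / A) ^+ 2))%R)%:E
  = (pi * A * B)%:E.
Proof.
move=> A0 B0.
pose F := (fun t : R => h - A * cos t)%R.
pose G := (fun t : R => 2 * B * Num.sqrt (1 - ((t - h) / A) ^+ 2))%R.
have F0 : F 0%R = (h - A)%R by rewrite /F cos0 mulr1.
have Fpi : F pi = (h + A)%R by rewrite /F cospi mulrN1 opprK.
have := @integration_by_substitution_increasing R F G 0%R pi.
have FE : derive1 F = (fun x => A * sin x)%R := dF1 h A.
have cF : continuous F by apply: cont_of_der => x; apply: ex_derive; exact: dF.
have csin : continuous (fun x : R => A * sin x)%R.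
  by apply: cont_of_der => x; apply: ex_derive.
rewrite F0 Fpi => ->.
- transitivity (\int[mu]_(x in `[0%R, pi]) ((2 * A * B * sin x ^+ 2)%R)%:E).
    apply: eq_integral => x; rewrite inE /= in_itv /= => /andP [x0 xpi].
    rewrite FE /= /G /F.
    congr (EFin _); rewrite !fctE /=.
    have -> : ((h - A * cos x - h) / A = - cos x)%R by field; rewrite gt_eqF.
    rewrite sqrrN -sin2cos2 sqrtr_sqr ger0_norm; last by apply: sin_ge0_pi; rewrite x0 xpi.
    ring.
  pose H := (fun t : R => A * B * (t - sin t * cos t))%R.
  rewrite (@continuous_FTC2 R (fun x => 2 * A * B * sin x ^+ 2)%R H).
  + rewrite /H sin0 sinpi -EFinB; congr (EFin _); ring.
  + exact: pi_gt0.
  + apply: continuous_subspaceT.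
    by apply: cont_of_der => x; apply: ex_derive.
  + by apply: LRcont => x; apply: ex_derive; exact: dH.
  + by move=> x _; rewrite (dH1 A B).
- exact: pi_ge0.
- move=> x y; rewrite !inE /= => xI yI xy.
  rewrite /F ltrD2l ltrN2 ltr_pM2l //.
  by rewrite ltr_cos.
- by move=> x _; rewrite FE; apply: csin.
- rewrite FE; apply/cvg_ex; exists (A * sin 0)%R; apply: cvg_at_right_filter; apply: csin.
- rewrite FE; apply/cvg_ex; exists (A * sin pi)%R; apply: cvg_at_left_filter; apply: csin.
- by apply: LRcont => x; apply: ex_derive; exact: dF.
- apply: continuous_subspaceT; exact: G_cont.
Qed.

Lemma area_region (h k A B : R) : (0 < A)%R -> (0 < B)%R ->
  area (axis_ellipse_region h k A B) = (pi * A * B)%:E.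
Proof. by move=> A0 B0; rewrite area_step1 // half_disk. Qed.
End ER.
End Helpers.

Ltac fld := field; try (repeat (apply/andP; split)); try done.

Section More.
Variable R : realType.

Lemma on_axis (h k A B Cc S : R) : A != 0 -> B != 0 -> Cc ^+ 2 + S ^+ 2 = 4 ->
  axis_ellipse h k A B (h + A * (Cc / 2), k - B * (S / 2)).
Proof.
move=> A0 B0 H; rewrite /axis_ellipse /=.
have -> : ((h + A * (Cc / 2) - h) / A) ^+ 2 + ((k - B * (S / 2) - k) / B) ^+ 2
  = (Cc ^+ 2 + S ^+ 2) / 4 by fld.
by rewrite H; fld.
Qed.

Lemma form_axis (h k A B al be ga : R) : A != 0 -> B != 0 ->
  al * A ^+ 2 = 1 -> be = 0 -> ga * B ^+ 2 = 1 ->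
  [set p : R * R | al * (p.1 - h) ^+ 2 + 2 * be * (p.1 - h) * (p.2 - k)
                 + ga * (p.2 - k) ^+ 2 = 1] = axis_ellipse h k A B.
Proof.
move=> A0 B0 Ha Hb Hg.
have -> : al = (A ^+ 2)^-1 by rewrite -[al]mulr1 -(divff (expf_neq0 2 A0)) mulrA Ha mul1r.
have -> : ga = (B ^+ 2)^-1 by rewrite -[ga]mulr1 -(divff (expf_neq0 2 B0)) mulrA Hg mul1r.
apply/funext => p /=; rewrite /axis_ellipse /= Hb.
by congr (_ = 1); fld.
Qed.

Lemma form_eq (h k al be ga A B Cc S : R) :
  al * (h + A * (Cc / 2) - h) ^+ 2 + 2 * be * (h + A * (Cc / 2) - h) * (k - B * (S / 2) - k)
    + ga * (k - B * (S / 2) - k) ^+ 2 = 1 ->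
  (al * A ^+ 2) * Cc ^+ 2 - 2 * (be * A * B) * Cc * S + (ga * B ^+ 2) * S ^+ 2 = 4.
Proof.
move=> H.
have -> : (al * A ^+ 2) * Cc ^+ 2 - 2 * (be * A * B) * Cc * S + (ga * B ^+ 2) * S ^+ 2
  = 4 * (al * (h + A * (Cc / 2) - h) ^+ 2 + 2 * be * (h + A * (Cc / 2) - h) * (k - B * (S / 2) - k)
    + ga * (k - B * (S / 2) - k) ^+ 2) by fld.
by rewrite H mulr1.
Qed.

Lemma axis_bound (h k A B M : R) (p : R * R) : 0 < A -> 0 < B -> A <= M -> B <= M ->
  axis_ellipse h k A B p -> (p.1 - h) ^+ 2 + (p.2 - k) ^+ 2 <= M ^+ 2.
Proof.
move=> A0 B0 AM BM; rewrite /axis_ellipse /= => H.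
set x := (p.1 - h) / A in H; set y := (p.2 - k) / B in H.
have -> : p.1 - h = A * x by rewrite /x; field; rewrite gt_eqF.
have -> : p.2 - k = B * y by rewrite /y; field; rewrite gt_eqF.
have : A ^+ 2 <= M ^+ 2 by nra.
have : B ^+ 2 <= M ^+ 2 by nra.
have : 0 <= x ^+ 2 := sqr_ge0 x.
have : 0 <= y ^+ 2 := sqr_ge0 y.
nra.
Qed.

Lemma dist_bound (h k A B M : R) (p q : R * R) : 0 < A -> 0 < B -> A <= M -> B <= M ->
  axis_ellipse h k A B p -> axis_ellipse h k A B q -> dist2 p q <= 4 * M ^+ 2.
Proof.
move=> A0 B0 AM BM Hp Hq.
have := @axis_bound h k A B M p A0 B0 AM BM Hp.
have := @axis_bound h k A B M q A0 B0 AM BM Hq.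
rewrite /dist2.
have : 0 <= ((p.1 - h) + (q.1 - h)) ^+ 2 := sqr_ge0 _.
have : 0 <= ((p.2 - k) + (q.2 - k)) ^+ 2 := sqr_ge0 _.
nra.
Qed.

Lemma ratio_root (rho : R) : 0 < rho ->
  (3 * rho ^+ 2 - 2 * rho - 3 = 0 <-> rho = (1 + Num.sqrt 10) / 3).
Proof.
move=> r0.
have s0 : 0 <= Num.sqrt 10 :> R := sqrtr_ge0 _.
have Hs : Num.sqrt 10 ^+ 2 = 10 :> R by rewrite sqr_sqrtr.
set s := Num.sqrt 10 in s0 Hs *.
have s1 : 1 < s by nra.
split => [H|->].
  have : (3 * rho - 1 - s) * (3 * rho - 1 + s) = 0.
    have -> : (3 * rho - 1 - s) * (3 * rho - 1 + s) = 3 * (3 * rho ^+ 2 - 2 * rho - 3) by ring: Hs.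
    by rewrite H mulr0.
  move/eqP; rewrite mulf_eq0 => /orP [/eqP H1|/eqP H1]; lra.
have -> : 3 * ((1 + s) / 3) ^+ 2 - 2 * ((1 + s) / 3) - 3 = (s ^+ 2 - 10) / 3 by field.
by rewrite Hs subrr mul0r.
Qed.
End More.

Theorem proposition4p3 (R : realType) (a b c u : R) :
  b < a -> 0 < b -> 0 < c -> c ^+ 2 = a ^+ 2 - b ^+ 2 ->
  let E := axis_ellipse 0 0 a b in
  let C2 := (- ((a ^+ 2 + b ^+ 2) / (2 * a)) * cos u,
             - ((a ^+ 2 + b ^+ 2) / (2 * b)) * sin u) in
  let E' := axis_ellipse C2.1 C2.2 (3 * c ^+ 2 / (2 * a)) (3 * c ^+ 2 / (2 * b)) in
  let E'reg := axis_ellipse_region C2.1 C2.2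
                 (3 * c ^+ 2 / (2 * a)) (3 * c ^+ 2 / (2 * b)) in
  let Ereg := axis_ellipse_region 0 0 a b in
  (forall F : set (R * R),
     steiner_circumellipse (cusp a b c u 1) (cusp a b c u 2) (cusp a b c u 3) F
     <-> F = E') /\
  are_similar (@rot90 R @` E) E' /\
  area E'reg = (9 * pi * c ^+ 4 / (4 * a * b))%:E /\
  fine (area E'reg) / fine (area Ereg) = 9 * c ^+ 4 / (4 * a ^+ 2 * b ^+ 2) /\
  (are_congruent E E' <-> a / b = (1 + Num.sqrt 10) / 3).
Proof.
move=> hab hb hc hc2 E C2 E' E'reg Ereg.
have ha : 0 < a by apply: lt_trans hab.
have a0 : a != 0 by rewrite gt_eqF.
have b0 : b != 0 by rewrite gt_eqF.
have c0 : c != 0 by rewrite gt_eqF.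
have pi0 : pi != 0 :> R by rewrite gt_eqF // pi_gt0.
pose A' := 3 * c ^+ 2 / (2 * a).
pose B' := 3 * c ^+ 2 / (2 * b).
have A'0 : 0 < A'.
  rewrite /A'; apply: divr_gt0; first by apply: mulr_gt0 => //; apply: exprn_gt0.
  by apply: mulr_gt0.
have B'0 : 0 < B'.
  rewrite /B'; apply: divr_gt0; first by apply: mulr_gt0 => //; apply: exprn_gt0.
  by apply: mulr_gt0.
have A'n : A' != 0 by rewrite gt_eqF.
have B'n : B' != 0 by rewrite gt_eqF.
have AB' : A' < B'.
  have -> : A' = B' * (b / a) by rewrite /A' /B'; fld.
  rewrite gtr_pMr // ltr_pdivrMr // mul1r //.
have part1 : forall F : set (R * R),
     steiner_circumellipse (cusp a b c u 1) (cusp a b c u 2) (cusp a b c u 3) F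
     <-> F = E'.
  pose th := - (u / 3).
  pose w : R := 2 * pi / 3.
  have [cw [Hr sw0]] := w_facts R.
  have cw' : cos w = - 1 / 2 := cw.
  pose x := cos th. pose y := sin th. pose r := 2 * sin w.
  have K1 : cusp a b c u 1 = (C2.1 + A' * ((2 * x) / 2), C2.2 - B' * ((2 * y) / 2)).
    rewrite /cusp (_ : cusp_t u 1 = th); last by rewrite /cusp_t /th /=; field.
    rewrite (@Delta_at R a b c u th 0) //; last by rewrite /th; field.
    by rewrite /C2 /A' /B' /x /y /=; congr pair; fld.
  have K2 : cusp a b c u 2 = (C2.1 + A' * ((- x + r * y) / 2), C2.2 - B' * ((- y - r * x) / 2)).
    rewrite /cusp (_ : cusp_t u 2 = th - w); last by rewrite /cusp_t /th /w /=; field.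
    rewrite (@Delta_at R a b c u (th - w) 1) //; last by rewrite /th /w; field.
    by rewrite cosB sinB cw' /C2 /A' /B' /x /y /r /=; congr pair; fld.
  have K3 : cusp a b c u 3 = (C2.1 + A' * ((- x - r * y) / 2), C2.2 - B' * ((- y + r * x) / 2)).
    rewrite /cusp (_ : cusp_t u 3 = th + w - (pi *+ 2) *+ 1);
      last by rewrite /cusp_t /th /w /=; field.
    rewrite (@Delta_at R a b c u (th + w - (pi *+ 2) *+ 1) 2) //; last by rewrite /th /w; field.
    by rewrite pcos psin cosD sinD cw' /C2 /A' /B' /x /y /r /=; congr pair; fld.
  have Hcent : centroid (cusp a b c u 1) (cusp a b c u 2) (cusp a b c u 3) = C2.
    by rewrite /centroid K1 K2 K3 /C2 /=; congr pair; fld.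
  have Py : y ^+ 2 = 1 - x ^+ 2 by rewrite /x /y sin2cos2.
  have r0 : r != 0 by rewrite /r mulf_neq0 // gt_eqF.
  have Hr' : r ^+ 2 = 3 := Hr.
  rewrite /steiner_circumellipse Hcent K1 K2 K3.
  clearbody x y r.
  move=> F; split.
  - case=> [[al [be [ga [al0 [det FE]]]]] [F1 [F2 F3]]].
    move: F1 F2 F3; rewrite FE /= => /form_eq e1 /form_eq e2 /form_eq e3.
    have [X1 [Y0 Z1]] := @alg3 R _ _ _ _ _ _ Py Hr' r0 e1 e2 e3.
    have be0 : be = 0.
      by move: Y0; rewrite -mulrA => /eqP; rewrite mulf_eq0 (negbTE (mulf_neq0 A'n B'n)) orbF => /eqP.
    by apply: form_axis.
  - move=> ->; split.
      exists (A' ^+ 2)^-1, 0, (B' ^+ 2)^-1; split; first by rewrite invr_gt0 exprn_gt0.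
      split; first by rewrite expr0n /= subr0 mulr_gt0 // invr_gt0 exprn_gt0.
      by symmetry; apply: form_axis => //; rewrite mulVf // expf_neq0.
    split; [|split]; apply: on_axis => //; ring: Py Hr'.
have part2 : are_similar (@rot90 R @` E) E'.
  pose k := 3 * c ^+ 2 / (2 * a * b).
  have k0 : 0 < k.
    rewrite /k; apply: divr_gt0; first by apply: mulr_gt0 => //; apply: exprn_gt0.
    by apply: mulr_gt0 => //; apply: mulr_gt0.
  exists (fun p => (C2.1 + k * p.1, C2.2 + k * p.2)), k.
  split => //; split.
    by move=> p q; rewrite /dist2 /=; ring.
  rewrite /maps_onto; apply/seteqP; split.
  + move=> _ [_ [q Eq <-] <-]; move: Eq; rewrite /E' /E /axis_ellipse /rot90 /= => Eq.
    by rewrite -[RHS]Eq /k; fld.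
  + move=> p; rewrite /E' /axis_ellipse /= => Ep.
    exists (rot90 ((p.2 - C2.2) / k, - ((p.1 - C2.1) / k))).
      exists ((p.2 - C2.2) / k, - ((p.1 - C2.1) / k)) => //.
      by rewrite /E /axis_ellipse /= -[RHS]Ep /k; fld.
    by case: p Ep => p1 p2 _; rewrite /rot90 /k /=; congr pair; fld.
have areaE' : area E'reg = (pi * A' * B')%:E by rewrite /E'reg area_region.
have areaE : area Ereg = (pi * a * b)%:E by rewrite /Ereg area_region.
split => //; split => //; split.
  by rewrite areaE' /A' /B'; congr (EFin _); generalize (@pi R) => P; fld.
split.
  rewrite areaE' areaE /= /A' /B'; move: pi0; generalize (@pi R) => P P0; fld.
have key : 3 * a ^+ 2 - 2 * a * b - 3 * b ^+ 2 = 0 <-> a / b = (1 + Num.sqrt 10) / 3.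
  rewrite -ratio_root; last by apply: divr_gt0.
  have -> : 3 * (a / b) ^+ 2 - 2 * (a / b) - 3 = (3 * a ^+ 2 - 2 * a * b - 3 * b ^+ 2) / b ^+ 2
    by fld.
  split => [->|H]; first by rewrite mul0r.
  have : (3 * a ^+ 2 - 2 * a * b - 3 * b ^+ 2) / b ^+ 2 * b ^+ 2 = 0 by rewrite H mul0r.
  by rewrite divfK // expf_neq0.
rewrite -key; split.
- case=> f [iso onto].
  have hin : forall p, E p -> E' (f p) by move=> p Ep; rewrite -onto; exists p.
  have hpre : forall q, E' q -> exists2 p, E p & f p = q.
    by move=> q; rewrite -onto => -[p Ep <-]; exists p.
  have E1 : E (a, 0) by rewrite /E /axis_ellipse /=; fld.
  have E2 : E (- a, 0) by rewrite /E /axis_ellipse /=; fld.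
  have d1 := @dist_bound R C2.1 C2.2 A' B' B' _ _ A'0 B'0 (ltW AB') (lexx _) (hin _ E1) (hin _ E2).
  rewrite iso /dist2 /= in d1.
  have Q1 : E' (C2.1, C2.2 + B') by rewrite /E' /axis_ellipse /= /B'; fld.
  have Q2 : E' (C2.1, C2.2 - B') by rewrite /E' /axis_ellipse /= /B'; fld.
  have [p Ep fp] := hpre _ Q1.
  have [q Eq fq] := hpre _ Q2.
  have d2 := @dist_bound R 0 0 a b a _ _ ha hb (lexx _) (ltW hab) Ep Eq.
  have d3 := iso p q.
  rewrite fp fq /dist2 /= in d3.
  rewrite /dist2 in d2.
  have aB : a = B' by nra.
  move: aB; rewrite /B' => aB.
  have : 2 * a * b = 3 * c ^+ 2 by rewrite {1}aB; fld.
  rewrite hc2 => H; lra.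
- move=> H.
  have Hc : 3 * c ^+ 2 = 2 * a * b by rewrite hc2; lra.
  have hA : A' = b by rewrite /A' Hc; fld.
  have hB : B' = a by rewrite /B' Hc; fld.
  exists (fun p => (C2.1 - p.2, C2.2 + p.1)); split.
    by move=> p q; rewrite /dist2 /=; ring.
  rewrite /maps_onto; apply/seteqP; split.
  + move=> _ [p Ep <-]; move: Ep; rewrite /E' /E /axis_ellipse /= -/A' -/B' hA hB => Ep.
    by rewrite -[RHS]Ep; fld.
  + move=> q; rewrite /E' /axis_ellipse /= -/A' -/B' hA hB => Eq.
    exists (q.2 - C2.2, C2.1 - q.1).
      by rewrite /E /axis_ellipse /= -[RHS]Eq; fld.
    by case: q Eq => q1 q2 _ /=; congr pair; ring.
Qed.
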